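(* Let $L>0$ and let $a,c\in C^1_{\mathrm{pw}}[-L,L]$ with $a_{\min}\le a\le a_{\max}$, $c_{\min}\le c\le c_{\max}$, $a_{\min},c_{\min}>0$, and let $-L=z_0<\dots<z_N=L$ be a partition such that on each $\tau_j=(z_{j-1},z_j)$, $a,c\in C^1[z_{j-1},z_j]$ and each of $a',c'$ is either $>0$ throughout $\tau_j$ or $\le0$ throughout $\tau_j$. Define $\tilde a$ on $\tau_j$ by $\tilde a=a$ if $a'>0$ on $\tau_j$ and $\tilde a\equiv a^+(z_{j-1})$ if $a'\le0$ on $\tau_j$, and $\tilde c$ analogously from $c$. For $j=1,\dots,N-1$ let $$\alpha_j=\max\Big\{\frac{\tilde a^-(z_j)}{\tilde a^+(z_j)},1\Big\},\quad \sigma_j=\max\Big\{\frac{(\tilde c^2)^-(z_j)}{(\tilde c^2)^+(z_j)},1\Big\},\quad \gamma_j=\max\Big\{\frac{a^+(z_j)}{a^-(z_j)},\frac{(c^2)^+(z_j)}{(c^2)^-(z_j)},1\Big\}.$$ Define $A_1=0$ and $A_{j+1}=\alpha_j\sigma_j\gamma_j\big(\int_{\tau_j}\frac{1}{\tilde a\,\tilde c^2}+A_j\big)$ for $j=1,\dots,N-1$, and $$q(x)=\tilde a(x)\tilde c^2(x)\Big(\int_{z_{j-1}}^x\frac{ds}{\tilde a(s)\tilde c^2(s)}+A_j\Big),\qquad x\in\tau_j,\ 1\le j\le N.$$ Then $q$ is increasing on $[-L,L]$, $q(-L)=0$, and for each $j=1,\dots,N$, $$\partial_{\mathrm{pw}}\Big(\frac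 qa\Big)(x)\ge\frac1{a(x)},\qquad\partial_{\mathrm{pw}}\Big(\frac q{c^2}\Big)(x)\ge\frac1{c^2(x)},\qquad x\in\tau_j,$$ and $[q/a]_{z_j}\le0$, $[q/c^2]_{z_j}\le0$ for $j=1,\dots,N-1$.
   Context: $C^1_{\mathrm{pw}}[-L,L]$ is the set of $g:[-L,L]\to\mathbb{R}$ for which there is a finite partition $-L=z_0<\dots<z_N=L$ with $g\in C^1[z_{j-1},z_j]$ for each $j$ and, on each $(z_{j-1},z_j)$, either $g'>0$ throughout or $g'\le0$ throughout. For the partition, $g^+(z_j)$, $g^-(z_j)$ are the right and left one-sided limits, $[g]_{z_j}=g^-(z_j)-g^+(z_j)$ for interior points, and $\partial_{\mathrm{pw}}g=g'$ on each open subinterval. $q(-L)$ means the limit from the right. *)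

(* Defs.v *)
From Stdlib Require Import Reals ClassicalEpsilon.
From Coquelicot Require Import Coquelicot.
Open Scope R_scope.

(* The modified function \tilde g on tau_j = (zl, zr), built from the C^1
   piece g of the function on [zl, zr]: g itself if g' > 0 throughout (zl,zr),
   and the constant g^+(zl) = g zl otherwise (i.e. when g' <= 0 throughout). *)
Definition tilde (g : R -> R) (zl zr : R) (x : R) : R :=
  if excluded_middle_informative (forall y, zl < y < zr -> 0 < Derive g y)
  then g x else g zl.

(* Main.v *)
Require Import Defs.
From Stdlib Require Import Reals ClassicalEpsilon Lra Lia.
From Coquelicot Require Import Coquelicot.
Open Scope R_scope.

Lemma loc_int l r x : l < x < r -> locally x (fun t => l < t < r).
Proof. intros H. apply locally_interval with (a := Finite l) (b := Finite r); simpl; tauto. Qed.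

Lemma at_left_int l r : l < r -> at_left r (fun t => l < t < r).
Proof. intros H. unfold at_left, within.
  apply locally_interval with (a := Finite l) (b := p_infty); simpl; auto. Qed.

Lemma at_right_int l r : l < r -> at_right l (fun t => l < t < r).
Proof. intros H. unfold at_right, within.
  apply locally_interval with (a := m_infty) (b := Finite r); simpl; auto. Qed.

Lemma cont_left (P : R -> R) r : continuous P r -> filterlim P (at_left r) (locally (P r)).
Proof. intro H. eapply filterlim_filter_le_1; [apply filter_le_within|exact H]. Qed.

Lemma cont_right (P : R -> R) r : continuous P r -> filterlim P (at_right r) (locally (P r)).
Proof. intro H. eapply filterlim_filter_le_1; [apply filter_le_within|exact H]. Qed.

Lemma closed_lb (f : R -> R) l r m : l < r -> (forall x, l <= x <= r -> continuous f x) ->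
  (forall x, l < x < r -> m <= f x) -> forall x, l <= x <= r -> m <= f x.
Proof.
  intros Hlr Hc Hb x Hx.
  destruct (Req_dec x l) as [->|Hxl].
  - assert (H := filterlim_le (F := at_right l) (fun _ => m) f m (f l)).
    simpl in H. apply H.
    + eapply filter_imp; [|apply (at_right_int l r Hlr)]. intros t Ht; apply Hb; exact Ht.
    + apply filterlim_const.
    + apply cont_right, Hc; lra.
  - destruct (Req_dec x r) as [->|Hxr].
    + assert (H := filterlim_le (F := at_left r) (fun _ => m) f m (f r)).
      simpl in H. apply H.
      * eapply filter_imp; [|apply (at_left_int l r Hlr)]. intros t Ht; apply Hb; exact Ht.
      * apply filterlim_const.
      * apply cont_left, Hc; lra.
    + apply Hb; lra.
Qed.
Lemma tilde_lem (f : R -> R) l r m : l < r -> 0 < m ->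
  (forall x, l <= x <= r -> ex_derive f x) -> (forall x, l <= x <= r -> m <= f x) ->
  ((forall x, l < x < r -> 0 < Derive f x) \/ (forall x, l < x < r -> Derive f x <= 0)) ->
  exists dF : R -> R,
    (forall y, l <= y <= r -> is_derive (tilde f l r) y (dF y)) /\
    (forall y, l < y < r -> 0 <= dF y /\ 0 <= dF y * f y - tilde f l r y * Derive f y) /\
    (forall y, l <= y <= r -> m <= tilde f l r y) /\ tilde f l r l = f l.
Proof.
  intros Hlr Hm Hd Hb Hdisj. unfold tilde.
  destruct (excluded_middle_informative _) as [P|P].
  - exists (Derive f). split; [|split; [|split]].
    + intros y Hy. apply Derive_correct, Hd, Hy.
    + intros y Hy. split; [left; apply P, Hy|]. right; ring.
    + exact Hb.
    + reflexivity.
  - exists (fun _ => 0). split; [|split; [|split]].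
    + intros y Hy. apply (is_derive_const (f l) y).
    + intros y Hy. destruct Hdisj as [H|H]; [contradiction|].
      split; [lra|]. assert (m <= f l) by (apply Hb; lra). specialize (H y Hy).
      assert (0 <= f l * - Derive f y) by (apply Rmult_le_pos; lra). lra.
    + intros y Hy. apply Hb; lra.
    + reflexivity.
Qed.

Lemma is_derive_P3 (u v w : R -> R) (y du dv dw : R) : is_derive u y du -> is_derive v y dv ->
  is_derive w y dw ->
  is_derive (fun t => u t * v t * w t) y ((du * v y + u y * dv) * w y + u y * v y * dw).
Proof.
  intros Hu Hv Hw.
  apply (is_derive_mult (fun t => u t * v t) w); [|exact Hw|intros; apply Rmult_comm].
  apply (is_derive_mult u v); [exact Hu|exact Hv|intros; apply Rmult_comm].
Qed.

Lemma is_derive_sq (v : R -> R) (y dv : R) : is_derive v y dv ->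
  is_derive (fun t => v t ^ 2) y (2 * dv * v y).
Proof.
  intros H. replace (2 * dv * v y) with (INR 2 * dv * v y ^ Init.Nat.pred 2) by (simpl; ring).
  apply is_derive_pow; exact H.
Qed.

Lemma is_derive_h (F G : R -> R) (y dF dG : R) : is_derive F y dF -> is_derive G y dG ->
  F y <> 0 -> G y <> 0 -> ex_derive (fun s => 1 / (F s * G s ^ 2)) y.
Proof.
  intros HF HG HF0 HG0.
  eexists. apply (is_derive_ext (fun s => / (F s * G s ^ 2))).
  1: { intros t. unfold Rdiv. rewrite Rmult_1_l. reflexivity. }
  apply is_derive_inv.
  - apply (is_derive_mult F (fun t => G t ^ 2)); [exact HF| |intros; apply Rmult_comm].
    apply is_derive_sq; exact HG.
  - apply Rmult_integral_contrapositive_currified; [exact HF0|]. apply pow_nonzero; exact HG0.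
Qed.
Lemma piece (l r m1 m2 B : R) (f g a c q : R -> R) :
  l < r -> 0 < m1 -> 0 < m2 -> 0 <= B ->
  (forall x, l <= x <= r -> ex_derive f x /\ ex_derive g x) ->
  (forall x, l <= x <= r -> m1 <= f x /\ m2 <= g x) ->
  ((forall x, l < x < r -> 0 < Derive f x) \/ (forall x, l < x < r -> Derive f x <= 0)) ->
  ((forall x, l < x < r -> 0 < Derive g x) \/ (forall x, l < x < r -> Derive g x <= 0)) ->
  (forall x, l < x < r -> a x = f x /\ c x = g x) ->
  (forall x, l < x < r -> q x = tilde f l r x * (tilde g l r x)^2 *
       (RInt (fun s => 1 / (tilde f l r s * (tilde g l r s)^2)) l x + B)) ->
  let F := tilde f l r in let G := tilde g l r in
  let Qr := F r * (G r)^2 * (RInt (fun s => 1 / (tilde f l r s * (tilde g l r s)^2)) l r + B) in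
  let Ql := F l * (G l)^2 * B in
  (0 <= RInt (fun s => 1 / (tilde f l r s * (tilde g l r s)^2)) l r /\
  0 < F r /\ 0 < G r /\ F l = f l /\ G l = g l) /\
  (forall x, l < x < r ->
     ex_derive (fun y => q y / a y) x /\
     1 / a x <= Derive (fun y => q y / a y) x /\
     ex_derive (fun y => q y / (c y)^2) x /\
     1 / (c x)^2 <= Derive (fun y => q y / (c y)^2) x) /\
  (forall x y, l < x < r -> l < y < r -> x < y -> q x < q y) /\
  (forall x, l < x < r -> q x < Qr) /\ (forall x, l < x < r -> Ql < q x) /\
  filterlim q (at_right l) (locally Ql) /\
  filterlim (fun y => q y / a y) (at_left r) (locally (Qr / f r)) /\
  filterlim (fun y => q y / a y) (at_right l) (locally (Ql / f l)) /\
  filterlim (fun y => q y / (c y)^2) (at_left r) (locally (Qr / (g r)^2)) /\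
  filterlim (fun y => q y / (c y)^2) (at_right l) (locally (Ql / (g l)^2)).
Proof.
  intros Hlr Hm1 Hm2 HB Hd Hb Hdf Hdg Hac Hq.
  destruct (tilde_lem f l r m1) as [dF [HdF [HdFs [HFb HFl]]]]; auto.
  { intros; apply Hd; auto. } { intros; apply Hb; auto. }
  destruct (tilde_lem g l r m2) as [dG [HdG [HdGs [HGb HGl]]]]; auto.
  { intros; apply Hd; auto. } { intros; apply Hb; auto. }
  set (F := tilde f l r) in *. set (G := tilde g l r) in *.
  set (h := fun s => 1 / (F s * G s ^ 2)).
  assert (HFp : forall y, l <= y <= r -> 0 < F y) by (intros y Hy; specialize (HFb y Hy); lra).
  assert (HGp : forall y, l <= y <= r -> 0 < G y) by (intros y Hy; specialize (HGb y Hy); lra).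
  assert (Hhc : forall y, l <= y <= r -> continuous h y).
  { intros y Hy. apply (ex_derive_continuous (K := R_AbsRing) (V := R_NormedModule) h).
    apply (is_derive_h F G y (dF y) (dG y)); auto.
    - specialize (HFp y Hy); lra. - specialize (HGp y Hy); lra. }
  destruct (C0_extension_le h l r Hhc) as [gh [Hgc Hgh]].
  set (Ib := fun y => RInt gh l y).
  assert (HIder : forall y, is_derive Ib y (gh y)).
  { intros y. apply (is_derive_RInt gh Ib l y); [|apply Hgc].
    exists (mkposreal _ Rlt_0_1). intros b _. unfold Ib. apply (RInt_correct gh l b). apply (ex_RInt_continuous gh).
    intros; apply Hgc. }
  assert (HIeq : forall y, l <= y <= r -> RInt h l y = Ib y).
  { intros y Hy. unfold Ib. apply RInt_ext. intros x Hx.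
    rewrite Rmin_left in Hx by lra. rewrite Rmax_right in Hx by lra.
    symmetry; apply Hgh; lra. }
  assert (HIl : Ib l = 0) by (unfold Ib; rewrite RInt_point; reflexivity).
  assert (Hone : forall y, l <= y <= r -> F y * G y ^ 2 * h y = 1).
  { intros y Hy. unfold h. specialize (HFp y Hy). specialize (HGp y Hy). field. lra. }
  assert (Hhp : forall y, l <= y <= r -> 0 < h y).
  { intros y Hy. unfold h. specialize (HFp y Hy). specialize (HGp y Hy).
    apply Rdiv_lt_0_compat; [lra|]. apply Rmult_lt_0_compat; [lra|]. apply pow_lt; lra. }
  assert (HIp : forall y, l <= y <= r -> 0 <= Ib y).
  { intros y Hy. destruct (Req_dec y l) as [->|Hyl]; [lra|].
    destruct (MVT_cor2 Ib gh l y) as [cc [Hcc1 Hcc2]]; [lra| |].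
    { intros cc _. apply is_derive_Reals, HIder. }
    rewrite Hgh in Hcc1 by lra. specialize (Hhp cc ltac:(lra)).
    assert (0 < h cc * (y - l)) by (apply Rmult_lt_0_compat; lra). lra. }
  intros F0 G0 Qr Ql. change F0 with F in *. change G0 with G in *. clear F0 G0.
  split.
  { split; [rewrite HIeq by lra; apply HIp; lra|].
    split; [apply HFp; lra|]. split; [apply HGp; lra|]. split; auto. }
  set (P := fun y => F y * G y ^ 2 * (Ib y + B)).
  set (dP := fun y => (dF y * G y ^ 2 + F y * (2 * dG y * G y)) * (Ib y + B) + F y * G y ^ 2 * gh y).
  assert (HPd : forall y, l <= y <= r -> is_derive P y (dP y)).
  { intros y Hy. unfold P, dP. apply (is_derive_P3 F (fun t => G t ^ 2) (fun t => Ib t + B)).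
    - apply HdF; auto. - apply is_derive_sq, HdG; auto.
    - assert (H : is_derive (fun t => Ib t + B) y (gh y + 0)).
      { apply (is_derive_plus Ib (fun _ => B)); [apply HIder| apply (is_derive_const (K:=R_AbsRing) (V:=R_NormedModule) B y)]. }
      rewrite Rplus_0_r in H. exact H. }
  assert (HdPpos : forall y, l < y < r -> 1 <= dP y).
  { intros y Hy. unfold dP. rewrite Hgh by lra. rewrite Hone by lra.
    destruct (HdFs y Hy) as [H1 _]. destruct (HdGs y Hy) as [H2 _].
    assert (HF' := HFp y ltac:(lra)). assert (HG' := HGp y ltac:(lra)).
    assert (HI' := HIp y ltac:(lra)).
    assert (0 <= (dF y * G y ^ 2 + F y * (2 * dG y * G y)) * (Ib y + B)).
    { apply Rmult_le_pos; [|lra]. apply Rplus_le_le_0_compat.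
      - apply Rmult_le_pos; [lra|]. apply pow_le; lra.
      - apply Rmult_le_pos; [lra|]. apply Rmult_le_pos; [|lra]. lra. }
    lra. }
  assert (Hmono : forall x y, l <= x -> x < y -> y <= r -> P x < P y).
  { intros x y H1 H2 H3. destruct (MVT_cor2 P dP x y) as [cc [Hcc1 Hcc2]]; [lra| |].
    { intros cc Hcc. apply is_derive_Reals, HPd; lra. }
    specialize (HdPpos cc ltac:(lra)).
    assert (0 < dP cc * (y - x)) by (apply Rmult_lt_0_compat; lra). lra. }
  assert (HqP : forall x, l < x < r -> q x = P x).
  { intros x Hx. rewrite Hq by auto. unfold P. rewrite <- HIeq by lra. reflexivity. }
  assert (HPr : P r = Qr) by (unfold P, Qr; rewrite <- HIeq by lra; reflexivity).
  assert (HPl : P l = Ql) by (unfold P, Ql; rewrite HIl; f_equal; ring).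
  assert (Hfp : forall y, l <= y <= r -> 0 < f y) by (intros y Hy; destruct (Hb y Hy); lra).
  assert (Hgp : forall y, l <= y <= r -> 0 < g y) by (intros y Hy; destruct (Hb y Hy); lra).
  assert (HPa : forall x, l <= x <= r ->
    is_derive (fun t => P t / f t) x ((dP x * f x - P x * Derive f x) / f x ^ 2)).
  { intros x Hx. apply is_derive_div; [apply HPd; auto|apply Derive_correct, Hd; auto|].
    specialize (Hfp x Hx); lra. }
  assert (HPc : forall x, l <= x <= r ->
    is_derive (fun t => P t / (g t) ^ 2) x
      ((dP x * g x ^ 2 - P x * (2 * Derive g x * g x)) / (g x ^ 2) ^ 2)).
  { intros x Hx. apply is_derive_div; [apply HPd; auto|apply is_derive_sq, Derive_correct, Hd; auto|].
    specialize (Hgp x Hx). apply pow_nonzero; lra. }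
  split.
  { intros x Hx.
    assert (HF' := HFp x ltac:(lra)). assert (HG' := HGp x ltac:(lra)).
    assert (HI' := HIp x ltac:(lra)). assert (Hf' := Hfp x ltac:(lra)).
    assert (Hg' := Hgp x ltac:(lra)).
    destruct (HdFs x Hx) as [H1 H2]. destruct (HdGs x Hx) as [H3 H4].
    assert (Hloc1 : locally x (fun t => P t / f t = q t / a t)).
    { eapply filter_imp; [|apply (loc_int l r x Hx)]. intros t Ht.
      rewrite HqP by auto. destruct (Hac t Ht) as [-> _]. reflexivity. }
    assert (Hloc2 : locally x (fun t => P t / (g t) ^ 2 = q t / (c t) ^ 2)).
    { eapply filter_imp; [|apply (loc_int l r x Hx)]. intros t Ht.
      rewrite HqP by auto. destruct (Hac t Ht) as [_ ->]. reflexivity. }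
    assert (Hqa := is_derive_ext_loc _ _ x _ Hloc1 (HPa x ltac:(lra))).
    assert (Hqc := is_derive_ext_loc _ _ x _ Hloc2 (HPc x ltac:(lra))).
    destruct (Hac x Hx) as [Hax Hcx].
    split; [eexists; exact Hqa|].
    assert (HD : Derive (fun y => q y / a y) x = (dP x * f x - P x * Derive f x) / f x ^ 2)
      by (apply is_derive_unique; exact Hqa).
    split; [rewrite HD, Hax|].
    { set (X := Ib x + B).
      set (K := G x ^ 2 * (dF x * f x - F x * Derive f x) + 2 * F x * G x * dG x * f x).
      assert (HK : 0 <= K).
      { unfold K. apply Rplus_le_le_0_compat.
        - apply Rmult_le_pos; [apply pow_le; lra|lra].
        - repeat apply Rmult_le_pos; lra. }
      assert (E : (dP x * f x - P x * Derive f x) / f x ^ 2 = X * K / f x ^ 2 + 1 / f x).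
      { unfold dP, P, K, X. rewrite Hgh by lra. unfold h. field. lra. }
      rewrite E.
      assert (0 <= X * K / f x ^ 2).
      { apply Rmult_le_pos; [apply Rmult_le_pos; unfold X; lra|].
        left; apply Rinv_0_lt_compat, pow_lt; lra. }
      lra. }
    split; [eexists; exact Hqc|].
    assert (HD2 : Derive (fun y => q y / (c y) ^ 2) x =
       (dP x * g x ^ 2 - P x * (2 * Derive g x * g x)) / (g x ^ 2) ^ 2)
      by (apply is_derive_unique; exact Hqc).
    rewrite HD2, Hcx.
    { set (X := Ib x + B).
      set (K := dF x * G x ^ 2 * g x ^ 2 + 2 * F x * G x * (dG x * g x - G x * Derive g x) * g x).
      assert (HK : 0 <= K).
      { unfold K. apply Rplus_le_le_0_compat.
        - repeat apply Rmult_le_pos; try lra; apply pow_le; lra.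
        - repeat apply Rmult_le_pos; lra. }
      assert (E : (dP x * g x ^ 2 - P x * (2 * Derive g x * g x)) / (g x ^ 2) ^ 2
                  = X * K / (g x ^ 2) ^ 2 + 1 / g x ^ 2).
      { unfold dP, P, K, X. rewrite Hgh by lra. unfold h. field. lra. }
      rewrite E.
      assert (0 <= X * K / (g x ^ 2) ^ 2).
      { apply Rmult_le_pos; [apply Rmult_le_pos; unfold X; lra|].
        left; apply Rinv_0_lt_compat, pow_lt, pow_lt; lra. }
      lra. } }
  split.
  { intros x y Hx Hy Hxy. rewrite !HqP by auto. apply Hmono; lra. }
  split.
  { intros x Hx. rewrite HqP, <- HPr by auto. apply Hmono; lra. }
  split.
  { intros x Hx. rewrite HqP, <- HPl by auto. apply Hmono; lra. }
  assert (HlocR : at_right l (fun t => P t = q t)).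
  { eapply filter_imp; [|apply (at_right_int l r Hlr)]. intros t Ht. symmetry; apply HqP; auto. }
  assert (HlocRa : at_right l (fun t => P t / f t = q t / a t)).
  { eapply filter_imp; [|apply (at_right_int l r Hlr)]. intros t Ht.
    rewrite HqP by auto. destruct (Hac t Ht) as [-> _]. reflexivity. }
  assert (HlocLa : at_left r (fun t => P t / f t = q t / a t)).
  { eapply filter_imp; [|apply (at_left_int l r Hlr)]. intros t Ht.
    rewrite HqP by auto. destruct (Hac t Ht) as [-> _]. reflexivity. }
  assert (HlocRc : at_right l (fun t => P t / (g t) ^ 2 = q t / (c t) ^ 2)).
  { eapply filter_imp; [|apply (at_right_int l r Hlr)]. intros t Ht.
    rewrite HqP by auto. destruct (Hac t Ht) as [_ ->]. reflexivity. }
  assert (HlocLc : at_left r (fun t => P t / (g t) ^ 2 = q t / (c t) ^ 2)).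
  { eapply filter_imp; [|apply (at_left_int l r Hlr)]. intros t Ht.
    rewrite HqP by auto. destruct (Hac t Ht) as [_ ->]. reflexivity. }
  split.
  { rewrite <- HPl. apply (filterlim_ext_loc P); [exact HlocR|]. apply cont_right.
    apply (ex_derive_continuous (K := R_AbsRing) (V := R_NormedModule) P).
    eexists; apply HPd; lra. }
  split.
  { rewrite <- HPr. apply (filterlim_ext_loc (fun t => P t / f t)); [exact HlocLa|].
    apply (cont_left (fun t => P t / f t)).
    apply (ex_derive_continuous (K := R_AbsRing) (V := R_NormedModule)).
    eexists; apply HPa; lra. }
  split.
  { rewrite <- HPl. apply (filterlim_ext_loc (fun t => P t / f t)); [exact HlocRa|].
    apply (cont_right (fun t => P t / f t)).
    apply (ex_derive_continuous (K := R_AbsRing) (V := R_NormedModule)).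
    eexists; apply HPa; lra. }
  split.
  { rewrite <- HPr. apply (filterlim_ext_loc (fun t => P t / (g t) ^ 2)); [exact HlocLc|].
    apply (cont_left (fun t => P t / (g t) ^ 2)).
    apply (ex_derive_continuous (K := R_AbsRing) (V := R_NormedModule)).
    eexists; apply HPc; lra. }
  { rewrite <- HPl. apply (filterlim_ext_loc (fun t => P t / (g t) ^ 2)); [exact HlocRc|].
    apply (cont_right (fun t => P t / (g t) ^ 2)).
    apply (ex_derive_continuous (K := R_AbsRing) (V := R_NormedModule)).
    eexists; apply HPc; lra. }
Qed.
Lemma jump_alg (a1 a2 b1 b2 f1 f2 X al si ga : R) :
  0 < a1 -> 0 < a2 -> 0 < b1 -> 0 < b2 -> 0 < f1 -> 0 < f2 -> 0 <= X ->
  a1 / a2 <= al -> b1 / b2 <= si -> f2 / f1 <= ga ->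
  a1 * b1 * X / f1 - a2 * b2 * (al * si * ga * X) / f2 <= 0.
Proof.
  intros Ha1 Ha2 Hb1 Hb2 Hf1 Hf2 HX H1 H2 H3.
  assert (E1 : a1 <= a2 * al).
  { replace a1 with (a2 * (a1 / a2)) by (field; lra). apply Rmult_le_compat_l; lra. }
  assert (E2 : b1 <= b2 * si).
  { replace b1 with (b2 * (b1 / b2)) by (field; lra). apply Rmult_le_compat_l; lra. }
  assert (E3 : f2 <= f1 * ga).
  { replace f2 with (f1 * (f2 / f1)) by (field; lra). apply Rmult_le_compat_l; lra. }
  assert (E4 : a1 * b1 * f2 * X <= (a2 * al) * (b2 * si) * (f1 * ga) * X).
  { apply Rmult_le_compat_r; [lra|].
    apply Rmult_le_compat; try lra.
    - apply Rmult_le_pos; lra.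
    - apply Rmult_le_compat; lra. }
  assert (E : a1 * b1 * X / f1 - a2 * b2 * (al * si * ga * X) / f2
              = (a1 * b1 * f2 * X - (a2 * al) * (b2 * si) * (f1 * ga) * X) / (f1 * f2))
    by (field; lra).
  rewrite E. unfold Rdiv.
  assert (0 < / (f1 * f2)) by (apply Rinv_0_lt_compat, Rmult_lt_0_compat; lra).
  assert (0 <= ((a2 * al) * (b2 * si) * (f1 * ga) * X - a1 * b1 * f2 * X) * / (f1 * f2))
    by (apply Rmult_le_pos; lra).
  lra.
Qed.

Lemma chain_alg (qm qy a1 a2 b1 b2 X al si ga : R) :
  qm < a1 * b1 * X -> a2 * b2 * (al * si * ga * X) < qy ->
  0 < a1 -> 0 < a2 -> 0 < b1 -> 0 < b2 -> 0 <= X ->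
  a1 / a2 <= al -> b1 / b2 <= si -> 1 <= ga -> qm < qy.
Proof.
  intros H1 H2 Ha1 Ha2 Hb1 Hb2 HX Hal Hsi Hga.
  assert (J := jump_alg a1 a2 b1 b2 1 1 X al si ga Ha1 Ha2 Hb1 Hb2 Rlt_0_1 Rlt_0_1 HX Hal Hsi
    ltac:(unfold Rdiv; rewrite Rinv_1, Rmult_1_r; exact Hga)).
  unfold Rdiv in J. rewrite Rinv_1, !Rmult_1_r in J. lra.
Qed.

Theorem lemma5p9 (L : R) (N : nat) (z : nat -> R) (a c : R -> R)
  (ap cp : nat -> R -> R) (amin amax cmin cmax : R) (A : nat -> R) (q : R -> R) :
  0 < L -> (1 <= N)%nat ->
  z O = - L -> z N = L -> (forall j, (j < N)%nat -> z j < z (S j)) ->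
  0 < amin -> 0 < cmin ->
  (forall x, - L <= x <= L -> amin <= a x <= amax /\ cmin <= c x <= cmax) ->
  (* piecewise C^1 on the partition: ap j, cp j are the C^1 pieces on [z_{j-1}, z_j] *)
  (forall j, (1 <= j <= N)%nat ->
     (forall x, z (pred j) < x < z j -> a x = ap j x /\ c x = cp j x) /\
     (forall x, z (pred j) <= x <= z j ->
        ex_derive (ap j) x /\ continuous (Derive (ap j)) x /\
        ex_derive (cp j) x /\ continuous (Derive (cp j)) x) /\
     ((forall x, z (pred j) < x < z j -> 0 < Derive (ap j) x) \/
      (forall x, z (pred j) < x < z j -> Derive (ap j) x <= 0)) /\
     ((forall x, z (pred j) < x < z j -> 0 < Derive (cp j) x) \/
      (forall x, z (pred j) < x < z j -> Derive (cp j) x <= 0))) ->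
  let at_ j := tilde (ap j) (z (pred j)) (z j) in
  let ct j := tilde (cp j) (z (pred j)) (z j) in
  (* alpha_j, sigma_j, gamma_j; one-sided limits at z_j are the values of the pieces *)
  let alpha j := Rmax (at_ j (z j) / at_ (S j) (z j)) 1 in
  let sigma j := Rmax ((ct j (z j))^2 / (ct (S j) (z j))^2) 1 in
  let gamma j := Rmax (Rmax (ap (S j) (z j) / ap j (z j))
                            ((cp (S j) (z j))^2 / (cp j (z j))^2)) 1 in
  A 1%nat = 0 ->
  (forall j, (1 <= j <= N - 1)%nat ->
     A (S j) = alpha j * sigma j * gamma j *
               (RInt (fun s => 1 / (at_ j s * (ct j s)^2)) (z (pred j)) (z j) + A j)) ->
  (forall j, (1 <= j <= N)%nat -> forall x, z (pred j) < x < z j ->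
     q x = at_ j x * (ct j x)^2 *
           (RInt (fun s => 1 / (at_ j s * (ct j s)^2)) (z (pred j)) x + A j)) ->
  (* conclusions *)
  (forall x y j k, (1 <= j <= N)%nat -> (1 <= k <= N)%nat ->
     z (pred j) < x < z j -> z (pred k) < y < z k -> x < y -> q x < q y) /\
  filterlim q (at_right (- L)) (locally 0) /\
  (forall j, (1 <= j <= N)%nat -> forall x, z (pred j) < x < z j ->
     ex_derive (fun y => q y / a y) x /\
     1 / a x <= Derive (fun y => q y / a y) x /\
     ex_derive (fun y => q y / (c y)^2) x /\
     1 / (c x)^2 <= Derive (fun y => q y / (c y)^2) x) /\
  (forall j, (1 <= j <= N - 1)%nat ->
     (exists lm lp,
        filterlim (fun y => q y / a y) (at_left (z j)) (locally lm) /\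
        filterlim (fun y => q y / a y) (at_right (z j)) (locally lp) /\
        lm - lp <= 0) /\
     (exists lm lp,
        filterlim (fun y => q y / (c y)^2) (at_left (z j)) (locally lm) /\
        filterlim (fun y => q y / (c y)^2) (at_right (z j)) (locally lp) /\
        lm - lp <= 0)).
Proof.
  intros HL HN Hz0 HzN Hzinc Hamin Hcmin Hbd Hpw at_ ct alpha sigma gamma HA1 HArec Hq.
  subst at_ ct alpha sigma gamma. cbv beta in *.
  assert (Hzle : forall i k, (i <= k)%nat -> (k <= N)%nat -> z i <= z k).
  { intros i k Hik HkN. induction k as [|k IH].
    - assert (i = 0)%nat by lia. subst; lra.
    - destruct (Nat.eq_dec i (S k)) as [->|Hne]; [lra|].
      assert (z k < z (S k)) by (apply Hzinc; lia). specialize (IH ltac:(lia) ltac:(lia)). lra. }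
  assert (Hint : forall j, (1 <= j <= N)%nat -> - L <= z (pred j) /\ z (pred j) < z j /\ z j <= L).
  { intros j Hj. split; [rewrite <- Hz0; apply Hzle; lia|]. split.
    - replace j with (S (pred j)) at 2 by lia. apply Hzinc; lia.
    - rewrite <- HzN; apply Hzle; lia. }
  assert (Hcl : forall j, (1 <= j <= N)%nat -> forall x, z (pred j) <= x <= z j ->
            amin <= ap j x /\ cmin <= cp j x).
  { intros j Hj. destruct (Hint j Hj) as [H1 [H2 H3]].
    destruct (Hpw j Hj) as [Heq [Hder _]].
    intros x Hx. split.
    - apply (closed_lb (ap j) (z (pred j)) (z j)); auto.
      + intros y Hy. apply (ex_derive_continuous (K := R_AbsRing) (V := R_NormedModule)).
        apply Hder; auto.
      + intros y Hy. destruct (Heq y Hy) as [<- _]. apply Hbd; lra.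
    - apply (closed_lb (cp j) (z (pred j)) (z j)); auto.
      + intros y Hy. apply (ex_derive_continuous (K := R_AbsRing) (V := R_NormedModule)).
        apply Hder; auto.
      + intros y Hy. destruct (Heq y Hy) as [_ <-]. apply Hbd; lra. }
  assert (Hder2 : forall j, (1 <= j <= N)%nat -> forall x, z (pred j) <= x <= z j ->
             ex_derive (ap j) x /\ ex_derive (cp j) x).
  { intros j Hj x Hx. destruct (Hpw j Hj) as [_ [Hder _]]. split; apply Hder; auto. }
  assert (Hda : forall j, (1 <= j <= N)%nat ->
     ((forall x, z (pred j) < x < z j -> 0 < Derive (ap j) x) \/
      (forall x, z (pred j) < x < z j -> Derive (ap j) x <= 0))).
  { intros j Hj. apply (Hpw j Hj). }
  assert (Hdc : forall j, (1 <= j <= N)%nat ->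
     ((forall x, z (pred j) < x < z j -> 0 < Derive (cp j) x) \/
      (forall x, z (pred j) < x < z j -> Derive (cp j) x <= 0))).
  { intros j Hj. apply (Hpw j Hj). }
  assert (Heq : forall j, (1 <= j <= N)%nat ->
     (forall x, z (pred j) < x < z j -> a x = ap j x /\ c x = cp j x)).
  { intros j Hj. apply (Hpw j Hj). }
  pose proof (fun j (Hj : (1 <= j <= N)%nat) (HAj : 0 <= A j) =>
    piece (z (pred j)) (z j) amin cmin (A j) (ap j) (cp j) a c q (proj1 (proj2 (Hint j Hj)))
      Hamin Hcmin HAj (Hder2 j Hj) (Hcl j Hj) (Hda j Hj) (Hdc j Hj) (Heq j Hj) (Hq j Hj))
    as PieceAll.
  cbv zeta in PieceAll.
  assert (Anonneg : forall j, (1 <= j <= N)%nat -> 0 <= A j).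
  { intros j. induction j as [|j IH]; intros Hj; [lia|].
    destruct (Nat.eq_dec j 0) as [->|Hj0]; [rewrite HA1; lra|].
    rewrite HArec by lia.
    destruct (PieceAll j ltac:(lia) (IH ltac:(lia))) as [[HI _] _].
    specialize (IH ltac:(lia)).
    match goal with |- 0 <= ?al * ?si * ?ga * _ =>
      assert (1 <= al) by apply Rmax_r; assert (1 <= si) by apply Rmax_r;
      assert (1 <= ga) by apply Rmax_r end.
    apply Rmult_le_pos; [|lra]. repeat apply Rmult_le_pos; lra. }
  assert (Hpos : forall j, (1 <= j <= N)%nat -> forall x, z (pred j) <= x <= z j ->
            0 < ap j x /\ 0 < cp j x).
  { intros j Hj x Hx. destruct (Hcl j Hj x Hx). split; lra. }
  assert (Hstep : forall k, (1 <= k <= N - 1)%nat -> forall m y,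
            z (pred k) < m < z k -> z k < y < z (S k) -> q m < q y).
  { intros k Hk m y Hm Hy.
    destruct (PieceAll k ltac:(lia) (Anonneg k ltac:(lia)))
      as [[HI [HFr [HGr [HFl HGl]]]] [_ [_ [HM2 _]]]].
    destruct (PieceAll (S k) ltac:(lia) (Anonneg (S k) ltac:(lia)))
      as [[HI' [HFr' [HGr' [HFl' HGl']]]] [_ [_ [_ [HM3 _]]]]].
    specialize (HM2 m Hm). specialize (HM3 y Hy).
    change (Init.Nat.pred (S k)) with k in *.
    rewrite HArec in HM3 by lia. change (Init.Nat.pred (S k)) with k in *.
    destruct (Hpos (S k) ltac:(lia) (z k)) as [Ha2 Hc2].
    { change (Init.Nat.pred (S k)) with k. split; [lra|]. left; apply Hzinc; lia. }
    eapply (chain_alg _ _ _ _ _ _ _ _ _ _ HM2 HM3).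
    - exact HFr.
    - rewrite HFl'. exact Ha2.
    - apply pow_lt; exact HGr.
    - rewrite HGl'. apply pow_lt; exact Hc2.
    - apply Rplus_le_le_0_compat; [exact HI|apply Anonneg; lia].
    - apply Rmax_l.
    - apply Rmax_l.
    - apply Rmax_r. }
  assert (Hchain : forall d j, (1 <= j)%nat -> (j + d + 1 <= N)%nat -> forall x y,
            z (pred j) < x < z j -> z (pred (j + d + 1)%nat) < y < z (j + d + 1)%nat -> q x < q y).
  { induction d as [|d IH]; intros j Hj HjN x y Hx Hy.
    - replace (j + 0 + 1)%nat with (S j) in Hy by lia. apply (Hstep j ltac:(lia) x y Hx Hy).
    - set (k := (j + d + 1)%nat) in *.
      destruct (Hint k ltac:(lia)) as [_ [Hk _]].
      set (m := (z (pred k) + z k) / 2).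
      assert (Hm : z (pred k) < m < z k) by (unfold m; lra).
      assert (H1 := IH j Hj ltac:(lia) x m Hx Hm).
      replace (j + S d + 1)%nat with (S k) in Hy by (unfold k; lia).
      assert (H2 := Hstep k ltac:(lia) m y Hm Hy). lra. }
  split.
  { intros x y j k Hj Hk Hx Hy Hxy.
    destruct (Nat.lt_total j k) as [Hlt|[<-|Hgt]].
    - pose proof (Hchain (k - j - 1)%nat j ltac:(lia) ltac:(lia) x y Hx) as HC.
      replace (j + (k - j - 1) + 1)%nat with k in HC by lia. exact (HC Hy).
    - destruct (PieceAll j Hj (Anonneg j Hj)) as [_ [_ [HM1 _]]]. apply HM1; auto.
    - assert (z k <= z (pred j)) by (apply Hzle; lia). lra. }
  split.
  { destruct (PieceAll 1%nat ltac:(lia) (Anonneg 1%nat ltac:(lia)))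
      as [_ [_ [_ [_ [_ [HL1 _]]]]]].
    change (Init.Nat.pred 1) with 0%nat in HL1. rewrite Hz0, HA1, Rmult_0_r in HL1. exact HL1. }
  split.
  { intros j Hj. apply (PieceAll j Hj (Anonneg j Hj)). }
  intros k Hk.
  destruct (PieceAll k ltac:(lia) (Anonneg k ltac:(lia)))
    as [[HI [HFr [HGr [HFl HGl]]]] [_ [_ [_ [_ [_ [HLa [_ [HLc _]]]]]]]]].
  destruct (PieceAll (S k) ltac:(lia) (Anonneg (S k) ltac:(lia)))
    as [[HI' [HFr' [HGr' [HFl' HGl']]]] [_ [_ [_ [_ [_ [_ [HRa [_ HRc]]]]]]]]].
  change (Init.Nat.pred (S k)) with k in *.
  destruct (Hpos (S k) ltac:(lia) (z k)) as [Ha2 Hc2].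
  { change (Init.Nat.pred (S k)) with k. split; [lra|]. left; apply Hzinc; lia. }
  destruct (Hpos k ltac:(lia) (z k)) as [Ha1 Hc1].
  { destruct (Hint k ltac:(lia)) as [_ [Hk' _]]. split; lra. }
  assert (HX : 0 <= RInt (fun s => 1 / (tilde (ap k) (z (pred k)) (z k) s *
                  tilde (cp k) (z (pred k)) (z k) s ^ 2)) (z (pred k)) (z k) + A k).
  { apply Rplus_le_le_0_compat; [exact HI|apply Anonneg; lia]. }
  split.
  - do 2 eexists. split; [exact HLa|]. split; [exact HRa|].
    rewrite HArec by lia. change (Init.Nat.pred (S k)) with k.
    apply jump_alg.
    + exact HFr.
    + rewrite HFl'. exact Ha2.
    + apply pow_lt; exact HGr.
    + rewrite HGl'. apply pow_lt; exact Hc2.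
    + exact Ha1.
    + exact Ha2.
    + exact HX.
    + apply Rmax_l.
    + apply Rmax_l.
    + eapply Rle_trans; [|apply Rmax_l]. apply Rmax_l.
  - do 2 eexists. split; [exact HLc|]. split; [exact HRc|].
    rewrite HArec by lia. change (Init.Nat.pred (S k)) with k.
    apply jump_alg.
    + exact HFr.
    + rewrite HFl'. exact Ha2.
    + apply pow_lt; exact HGr.
    + rewrite HGl'. apply pow_lt; exact Hc2.
    + apply pow_lt; exact Hc1.
    + apply pow_lt; exact Hc2.
    + exact HX.
    + apply Rmax_l.
    + apply Rmax_l.
    + eapply Rle_trans; [|apply Rmax_l]. apply Rmax_r.
Qed.
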